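(* Let $f\in\mathbb{Z}[X]$ have degree $n\ge1$ and let $g\in\mathbb{Q}[X]$ be a nonzero divisor of $f$ in $\mathbb{Q}[X]$. Then $\Phi(g):=fg'/g$ lies in $\mathbb{Z}[X]$, has degree less than $n$, and $$\|\Phi(g)\|\le B(f):=2^{n-1}\,n\,\|f\|.$$
   Context: $\|\cdot\|$ denotes the $L^2$ norm of the coefficient vector of a polynomial. *)

(* Defs.v *)
From mathcomp Require Import all_boot all_order all_algebra.
Set Implicit Arguments. Unset Strict Implicit. Unset Printing Implicit Defensive.
Import Order.TTheory GRing.Theory Num.Theory.
Local Open Scope ring_scope.

Definition poly_norm2 (R : rcfType) (p : {poly int}) : R :=
  Num.sqrt (\sum_(i < size p) ((p`_i)%:~R : R) ^+ 2).

Definition Phi (f : {poly int}) (g : {poly rat}) : {poly rat} :=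
  (map_poly (intr : int -> rat) f * g^`()) %/ g.

(* Main.v *)
Require Import Defs.
From mathcomp Require Import all_boot all_order all_algebra.
From mathcomp Require Import algC ring zify.
Import Order.TTheory GRing.Theory Num.Theory.
Local Open Scope ring_scope.
Set Warnings "-notation-overridden,-ambiguous-paths".

Definition n1 (p : {poly algC}) := \sum_(i < size p) `|p`_i|.
Definition n2 (p : {poly algC}) := \sum_(i < size p) `|p`_i| ^+ 2.

Lemma sum_widen (G : algC -> algC) (p : {poly algC}) N :
  G 0 = 0 -> (size p <= N)%N ->
  \sum_(i < size p) G p`_i = \sum_(i < N) G p`_i.
Proof.
move=> G0 le; rewrite -!(big_mkord xpredT (fun i => G p`_i)).
rewrite (big_cat_nat (leq0n _) le) /= [X in _ + X]big1_seq ?addr0 // => i.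
rewrite mem_index_iota => /andP[_ /andP[h _]]; rewrite nth_default //.
Qed.

Lemma n1E (p : {poly algC}) N : (size p <= N)%N -> n1 p = \sum_(i < N) `|p`_i|.
Proof. by move=> h; rewrite /n1 (@sum_widen (fun x => `|x|) p N) ?normr0. Qed.
Lemma n2E (p : {poly algC}) N : (size p <= N)%N -> n2 p = \sum_(i < N) `|p`_i| ^+ 2.
Proof. by move=> h; rewrite /n2 (@sum_widen (fun x => `|x| ^+ 2) p N) ?normr0 ?expr0n. Qed.

Lemma n1_ge0 (p : {poly algC}) : 0 <= n1 p.
Proof. by apply: sumr_ge0 => i _. Qed.
Lemma n2_ge0 (p : {poly algC}) : 0 <= n2 p.
Proof. by apply: sumr_ge0 => i _; apply: exprn_ge0. Qed.

Lemma n1D (p : {poly algC}) q : n1 (p + q) <= n1 p + n1 q.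
Proof.
set N := maxn (size p) (size q).
rewrite (@n1E _ N) ?(leq_trans (size_polyD _ _)) //.
rewrite (@n1E _ N) ?leq_maxl // (@n1E _ N) ?leq_maxr //.
rewrite -big_split /=; apply: ler_sum => i _; rewrite coefD; exact: ler_normD.
Qed.

Lemma n1N (p : {poly algC}) : n1 (- p) = n1 p.
Proof. by rewrite /n1 size_polyN; apply: eq_bigr => i _; rewrite coefN normrN. Qed.

Lemma n1Z c (p : {poly algC}) : n1 (c *: p) = `|c| * n1 p.
Proof.
rewrite (@n1E _ (size p)) ?size_scale_leq // /n1 mulr_sumr.
by apply: eq_bigr => i _; rewrite coefZ normrM.
Qed.

Lemma n1X (p : {poly algC}) : n1 ('X * p) = n1 p.
Proof.
rewrite (@n1E _ (size p).+1); last first.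
  by rewrite (leq_trans (size_polyMleq _ _)) // size_polyX.
by rewrite big_ord_recl coefXM /= normr0 add0r; apply: eq_bigr => i _; rewrite coefXM.
Qed.

Lemma n1XsubC z (p : {poly algC}) : n1 (('X - z%:P) * p) <= (1 + `|z|) * n1 p.
Proof.
rewrite mulrBl mul_polyC mulrDl mul1r.
by rewrite (le_trans (n1D _ _)) // n1N n1X n1Z.
Qed.

Definition mx (z : algC) : algC := if `|z| <= 1 then 1 else `|z|.

Lemma norm_gt1 (z : algC) : ~~ (`|z| <= 1) -> 1 < `|z|.
Proof. by move=> h; rewrite real_ltNge ?real1 ?normr_real. Qed.

Lemma mx_ge1 z : 1 <= mx z.
Proof. rewrite /mx; case: ifP => h //; exact/ltW/norm_gt1/negbT. Qed.

Lemma mx_ge0 z : 0 <= mx z.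
Proof. exact: le_trans ler01 (mx_ge1 z). Qed.

Lemma le_1norm z : 1 + `|z| <= 2 * mx z.
Proof.
rewrite /mx; case: ifP => h; first by rewrite mulr1 lerD2l.
by rewrite mulr2n mulrDl mul1r lerD2r; apply/ltW/norm_gt1/negbT.
Qed.

Lemma prod_mx_ge1 (l : seq algC) : 1 <= \prod_(z <- l) mx z.
Proof.
elim: l => [|z l IH]; first by rewrite big_nil.
by rewrite big_cons; apply: mulr_ege1 (mx_ge1 z) IH.
Qed.

Lemma prod_mx_ge0 (l : seq algC) : 0 <= \prod_(z <- l) mx z.
Proof. exact: le_trans ler01 (prod_mx_ge1 l). Qed.

Lemma n1_1 : n1 1 = 1.
Proof. by rewrite /n1 size_poly1 big_ord1 coefC normr1. Qed.

Lemma n1_prod (l : seq algC) :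
  n1 (\prod_(z <- l) ('X - z%:P)) <= 2 ^+ size l * \prod_(z <- l) mx z.
Proof.
elim: l => [|z l IH]; first by rewrite !big_nil n1_1 mulr1.
rewrite !big_cons (le_trans (n1XsubC _ _)) //= exprS.
rewrite mulrACA; apply: ler_pM => //; first by rewrite addr_ge0.
  exact: n1_ge0.
exact: le_1norm.
Qed.

Lemma n1_deriv (s t : seq algC) :
  n1 (\prod_(z <- t) ('X - z%:P) * (\prod_(z <- s) ('X - z%:P))^`())
  <= (size s)%:R * 2 ^+ (size s + size t).-1 * \prod_(z <- s ++ t) mx z.
Proof.
elim: s t => [|z s IH] t.
  by rewrite big_nil derivC mulr0 /n1 size_poly0 big_ord0 mul0r mul0r.
rewrite big_cons derivM derivXsubC mul1r mulrDr mulrA.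
rewrite (le_trans (n1D _ _)) //.
have e1 : \prod_(x <- t) ('X - x%:P) * \prod_(x <- s) ('X - x%:P) =
          \prod_(x <- t ++ s) ('X - x%:P) by rewrite big_cat.
have e2 : \prod_(x <- t) ('X - x%:P) * ('X - z%:P) =
          \prod_(x <- z :: t) ('X - x%:P) by rewrite big_cons mulrC.
rewrite e1 e2 (le_trans (lerD (n1_prod _) (IH _))) //=.
have e3 : \prod_(x <- s ++ z :: t) mx x = \prod_(x <- (z :: s) ++ t) mx x.
  by apply: perm_big; rewrite /= -cat1s perm_catCA cat1s.
have e4 : \prod_(x <- t ++ s) mx x <= \prod_(x <- (z :: s) ++ t) mx x.
  have -> : \prod_(x <- t ++ s) mx x = \prod_(x <- s ++ t) mx x.
    by apply: perm_big; rewrite perm_catC.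
  rewrite cat_cons big_cons -[X in X <= _]mul1r.
  by rewrite ler_wpM2r ?prod_mx_ge0 ?mx_ge1.
rewrite e3 !size_cat addnS /= -[(size s).+1%:R]natr1 !mulrDl mul1r addrC.
apply: lerD => //; rewrite addnC.
by rewrite ler_wpM2l ?exprn_ge0.
Qed.

Lemma pt_id (x y a : algC) :
  `|x - a * y| ^+ 2 - `|a^* * x - y| ^+ 2 = (1 - a * a^*) * (`|x| ^+ 2 - `|y| ^+ 2).
Proof. rewrite !normCK !rmorphB !rmorphM /= conjCK; ring. Qed.

Lemma n2_flip (a : algC) (p : {poly algC}) :
  n2 (('X - a%:P) * p) = n2 ((a^* *: 'X - 1) * p).
Proof.
have E1 : ('X - a%:P) * p = 'X * p - a *: p by rewrite mulrBl mul_polyC.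
have E2 : (a^* *: 'X - 1) * p = a^* *: ('X * p) - p by rewrite mulrBl mul1r scalerAl.
have sX : (size ('X * p)%R <= (size p).+1)%N.
  by rewrite (leq_trans (size_polyMleq _ _)) // size_polyX.
have sp : (size p <= (size p).+1)%N by [].
rewrite E1 E2 (@n2E _ (size p).+1); last first.
  by rewrite (leq_trans (size_polyD _ _)) // size_polyN geq_max sX (leq_trans (size_scale_leq _ _)).
rewrite (@n2E _ (size p).+1); last first.
  by rewrite (leq_trans (size_polyD _ _)) // size_polyN geq_max sp (leq_trans (size_scale_leq _ _)).
apply/eqP; rewrite -subr_eq0 -sumrB.
under eq_bigr => i _ do rewrite !coefB !coefZ pt_id.
rewrite -mulr_sumr sumrB big_ord_recl big_ord_recr /= coefXM /= normr0 expr0n /= add0r.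
rewrite [p`_(size p)]nth_default // normr0 expr0n /= addr0.
under eq_bigr => i _ do rewrite coefXM /=.
by rewrite subrr mulr0.
Qed.

Definition phi (z : algC) : {poly algC} :=
  if `|z| <= 1 then 'X - z%:P else z^* *: 'X - 1.

Lemma n2_swap (l : seq algC) (p : {poly algC}) :
  n2 (p * \prod_(z <- l) ('X - z%:P)) = n2 (p * \prod_(z <- l) phi z).
Proof.
elim: l p => [|z l IH] p; first by rewrite !big_nil.
rewrite !big_cons mulrA IH.
set Q := \prod_(j <- l) phi j.
have -> : p * ('X - z%:P) * Q = ('X - z%:P) * (p * Q) by ring.
have -> : p * (phi z * Q) = phi z * (p * Q) by ring.
by rewrite /phi; case: ifP => _ //; rewrite n2_flip.
Qed.

Lemma lead_phi z : `|lead_coef (phi z)| = mx z.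
Proof.
rewrite /phi /mx; case: ifP => h; first by rewrite lead_coefXsubC normr1.
have nz : z^* != 0.
  apply/eqP => e; move: h; by rewrite -norm_conjC e normr0 ler01.
have -> : z^* *: 'X - 1 = z^* *: ('X - (z^*)^-1%:P).
  by rewrite scalerBr scale_polyC divff.
by rewrite lead_coefZ lead_coefXsubC mulr1 norm_conjC.
Qed.

Lemma n2_ge_lead (q : {poly algC}) : `|lead_coef q| ^+ 2 <= n2 q.
Proof.
rewrite lead_coefE /n2; case hs: (size q) => [|m] /=.
  by rewrite nth_default ?hs // normr0 expr0n big_ord0.
rewrite big_ord_recr /= lerDr; apply: sumr_ge0 => i _; exact: exprn_ge0.
Qed.

Lemma landau (c : algC) (l : seq algC) :
  (`|c| * \prod_(z <- l) mx z) ^+ 2 <= n2 (c *: \prod_(z <- l) ('X - z%:P)).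
Proof.
rewrite -mul_polyC n2_swap (le_trans _ (n2_ge_lead _)) //.
rewrite lead_coefM lead_coefC lead_coef_prod normrM normr_prod.
by rewrite [X in _ <= (_ * X) ^+ 2](eq_bigr _ (fun z _ => lead_phi z)).
Qed.

Lemma sq_le (x y : algC) : 0 <= x -> x <= y -> x ^+ 2 <= y ^+ 2.
Proof.
move=> x0 xy; apply: lerXn2r => //; rewrite nnegrE //; exact: le_trans xy.
Qed.

Lemma sq_sum m (F : nat -> algC) : (forall i, 0 <= F i) ->
  \sum_(i < m) F i ^+ 2 <= (\sum_(i < m) F i) ^+ 2.
Proof.
move=> F0; elim: m => [|m IH]; first by rewrite !big_ord0 expr0n.
rewrite !big_ord_recr /= sqrrD; apply: le_trans (lerD IH (lexx _)) _.
rewrite lerD2r lerDl mulrn_wge0 // mulr_ge0 //; exact: sumr_ge0.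
Qed.

Lemma n2_le_n1 (p : {poly algC}) : n2 p <= n1 p ^+ 2.
Proof. rewrite /n1 /n2; have := @sq_sum (size p) (fun i => `|p`_i|); apply => i //. Qed.

Lemma main_bound (s t : seq algC) (d e : algC) (n : nat) :
  (size s + size t)%N = n ->
  n2 ((e *: \prod_(z <- t) ('X - z%:P)) * (d *: \prod_(z <- s) ('X - z%:P))^`())
  <= (n%:R * 2 ^+ n.-1) ^+ 2 *
     n2 ((d *: \prod_(z <- s) ('X - z%:P)) * (e *: \prod_(z <- t) ('X - z%:P))).
Proof.
move=> hn.
have -> : (e *: \prod_(z <- t) ('X - z%:P)) * (d *: \prod_(z <- s) ('X - z%:P))^`()
   = (d * e) *: (\prod_(z <- t) ('X - z%:P) * (\prod_(z <- s) ('X - z%:P))^`()).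
  by rewrite derivZ -scalerAl -scalerAr scalerA mulrC.
have -> : (d *: \prod_(z <- s) ('X - z%:P)) * (e *: \prod_(z <- t) ('X - z%:P))
   = (d * e) *: \prod_(z <- s ++ t) ('X - z%:P).
  by rewrite -scalerAl -scalerAr scalerA big_cat.
apply: (le_trans (n2_le_n1 _)).
have L := landau (d * e) (s ++ t).
have K0 : 0 <= (n%:R * 2 ^+ n.-1 : algC) ^+ 2.
  by apply: exprn_ge0; rewrite mulr_ge0 ?ler0n ?exprn_ge0.
apply: le_trans (ler_wpM2l K0 L).
rewrite -exprMn; apply: sq_le; first exact: n1_ge0.
rewrite n1Z (le_trans (ler_wpM2l (normr_ge0 _) (n1_deriv s t))) //.
rewrite hn.
have sn : ((size s)%:R <= n%:R :> algC) by rewrite ler_nat -hn leq_addr.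
set P := \prod_(_ <- _) _.
set k := 2 ^+ n.-1.
have k0 : 0 <= k by apply: exprn_ge0.
have P0 : 0 <= P by apply: prod_mx_ge0.
have -> : `|d * e| * ((size s)%:R * k * P) = (size s)%:R * (k * (`|d * e| * P)) by ring.
have -> : n%:R * k * (`|d * e| * P) = n%:R * (k * (`|d * e| * P)) by ring.
by apply: ler_wpM2r => //; rewrite !mulr_ge0.
Qed.

Local Notation pZtoQ := (map_poly (intr : int -> rat)).
Local Notation pZtoC := (map_poly (intr : int -> algC)).

Lemma n2_intE (p : {poly int}) :
  n2 (pZtoC p) = (\sum_(i < size p) p`_i ^+ 2)%:~R.
Proof.
rewrite /n2 size_map_inj_poly; [|exact: intr_inj|by []].
rewrite rmorph_sum; apply: eq_bigr => i _.
by rewrite coef_map /= real_normK ?realz // rmorphXn.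
Qed.

Theorem corollary4p2 (R : rcfType) (f : {poly int}) (n : nat) (g : {poly rat}) :
  (1 <= n)%N -> size f = n.+1 -> g != 0 ->
  g %| map_poly (intr : int -> rat) f ->
  exists h : {poly int},
    [/\ map_poly (intr : int -> rat) h = Phi f g,
        (size h <= n)%N &
        poly_norm2 R h <= 2 ^+ n.-1 * n%:R * poly_norm2 R f].
Proof.
move=> n1 sf gn0 /dvdpP_rat_int [p1 [a an0 ge] [r fe]].
have p1n0 : p1 != 0 by apply: contraNneq gn0 => e; rewrite ge e rmorph0 scaler0.
have fn0 : f != 0 by rewrite -size_poly_eq0 sf.
have rn0 : r != 0 by apply: contraNneq fn0 => e; rewrite fe e mulr0.
exists (r * p1^`()); split.
- rewrite /Phi ge fe; apply/esym; rewrite rmorphM /= derivZ deriv_map /=.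
  have -> : pZtoQ p1 * pZtoQ r * (a *: pZtoQ p1^`()) =
            (a *: (pZtoQ r * pZtoQ p1^`())) * pZtoQ p1.
    by rewrite -scalerAr -scalerAl; congr (_ *: _); ring.
  rewrite divpZr // -scalerAl divpZl mulpK; last first.
    by rewrite map_poly_eq0_id0 ?lead_coef_eq0 // intr_eq0 lead_coef_eq0.
  rewrite scalerA mulVf // scale1r rmorphM /=.
  by [].
- have := size_polyMleq r p1^`().
  have := lt_size_deriv p1n0.
  have := size_mul p1n0 rn0.
  rewrite -fe sf.
  have : (0 < size r)%N by rewrite size_poly_gt0.
  have : (0 < size p1)%N by rewrite size_poly_gt0.
  move=> h1 h2 h3 h4 h5; apply: (leq_trans h5).
  have h3b : n.+1 = (size p1 + size r).-1 := h3. move: h1 h2 h3b h4; clear h3.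
  generalize (size p1) (size r) (size p1^`()) => x y z. lia.
- set h := r * p1^`().
  have inj : injective (intr : int -> algC) by exact: intr_inj.
  have sizeC (q : {poly int}) : size (pZtoC q) = size q.
    by rewrite size_map_inj_poly.
  have [s Es] := closed_field_poly_normal (pZtoC p1).
  have [t Et] := closed_field_poly_normal (pZtoC r).
  set d := lead_coef (pZtoC p1) in Es.
  set e := lead_coef (pZtoC r) in Et.
  have dn0 : d != 0 by rewrite lead_coef_eq0 -size_poly_eq0 sizeC size_poly_eq0.
  have en0 : e != 0 by rewrite lead_coef_eq0 -size_poly_eq0 sizeC size_poly_eq0.
  have fC : pZtoC f = (d * e) *: \prod_(z <- s ++ t) ('X - z%:P).
    by rewrite fe rmorphM /= Es Et -scalerAl -scalerAr scalerA big_cat.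
  have hn : (size s + size t)%N = n.
    have := sizeC f; rewrite fC size_scale ?mulf_neq0 // size_prod_XsubC sf size_cat.
    by case.
  have hC : pZtoC h = (e *: \prod_(z <- t) ('X - z%:P)) *
                      (d *: \prod_(z <- s) ('X - z%:P))^`().
    by rewrite /h rmorphM /= -deriv_map -Es -Et.
  have fC2 : pZtoC f = (d *: \prod_(z <- s) ('X - z%:P)) *
                       (e *: \prod_(z <- t) ('X - z%:P)).
    by rewrite fe rmorphM /= -Es -Et.
  have MB := @main_bound s t d e n hn.
  rewrite -hC -fC2 !n2_intE in MB.
  set A := \sum_(i < size h) h`_i ^+ 2 in MB.
  set B := \sum_(i < size f) f`_i ^+ 2 in MB.
  have AB : A <= (n%:Z * 2 ^+ n.-1) ^+ 2 * B.
    rewrite -(ler_int algC) rmorphM /= rmorphXn /= rmorphM /= rmorphXn /=.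
    exact: MB.
  have EA : \sum_(i < size h) ((h`_i)%:~R : R) ^+ 2 = A%:~R.
    by rewrite rmorph_sum; apply: eq_bigr => i _; rewrite rmorphXn.
  have EB : \sum_(i < size f) ((f`_i)%:~R : R) ^+ 2 = B%:~R.
    by rewrite rmorph_sum; apply: eq_bigr => i _; rewrite rmorphXn.
  set K : R := 2 ^+ n.-1 * n%:R.
  have K0 : 0 <= K by rewrite mulr_ge0 ?ler0n ?exprn_ge0.
  have ABR : (A%:~R : R) <= K ^+ 2 * B%:~R.
    have := AB; rewrite -(ler_int R) rmorphM /= rmorphXn /= rmorphM /= rmorphXn /= => H.
    rewrite /K [2 ^+ _ * _]mulrC; exact: H.
  rewrite /poly_norm2 EA EB; apply: le_trans (ler_wsqrtr ABR) _.
  by rewrite sqrtrM ?exprn_ge0 // sqrtr_sqr ger0_norm.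
Qed.
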